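(* In the setting described in the context, suppose $T$ and $A$ are irreducible and $r_A>1$. Then for $1<|z|<r_A$, $\det(I-\Gamma_A^*(z))=0$ if and only if $\det(I-R^*(z))=0$.
   Context: Let $M_0,M$ be positive integers. Consider a discrete-time Markov chain $\{(X_n,S_n)\}_{n\ge0}$ of M/G/1 type with state space $\{(0,j):1\le j\le M_0\}\cup\{(k,j):k\ge1,1\le j\le M\}$ (level $k$ = states with first coordinate $k$), with transition matrix in lexicographic order \[ T=\begin{pmatrix}B(0)&B(1)&B(2)&\cdots\\ C(0)&A(1)&A(2)&\cdots\\ O&A(0)&A(1)&\cdots\\ O&O&A(0)&\cdots\\ \vdots&\vdots&\vdots&\ddots\end{pmatrix}, \] with nonnegative blocks $A(k)$ ($M\times M$), $B(0)$, $B(k)$ ($k\ge1$), $C(0)$ of compatible sizes; $A=\sum_{k\ge0}A(k)$ stochastic, $B(0)e+\sum_{k\ge1}B(k)e=e$. $A^*(z)=\sum_{k\ge0}z^kA(k)$ with convergence radius $r_A$, $\Gamma_A^*(z)=z^{-1}A^*(z)$. $G$ is the $M\times M$ matrix with $[G]_{i,j}=\Pr[S_{a(k)}=j\mid X_0=k+1,S_0=i]$ ($a(k)=\inf\{n\ge1:X_n=k\}$), the minimal nonnegative solution of $X=\sum_k A(k)X^k$. $U(k)=\sum_{m\ge k+1}A(m)G^{m-k-1}$ ($k\ge0$), $R(k)=U(k)(I-U(0))^{-1}$ ($k\ge1$), $R^*(z)=\sum_{k\ge1}z^kR(k)$. *)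

(* Defs.v *)
From HB Require Import structures.
From mathcomp Require Import all_boot all_order all_algebra.
From mathcomp Require Import complex.
From mathcomp Require Import all_classical all_reals all_analysis.
Set Implicit Arguments.
Unset Strict Implicit.
Unset Printing Implicit Defensive.
Import Order.TTheory GRing.Theory Num.Theory.
Import numFieldNormedType.Exports numFieldTopology.Exports.
Import ComplexField.
Local Open Scope classical_set_scope.
Local Open Scope ring_scope.

Section MG1.
Context {R : realType}.

Definition mxpow {n : nat} (X : 'M[R]_n) (k : nat) : 'M[R]_n :=
  iter k (mulmx X) 1%:M.

(** Entrywise sum of an infinite series of real matrices
    (junk value if some entry series diverges). *)
Definition mxsum {m n : nat} (F : nat -> 'M[R]_(m, n)) : 'M[R]_(m, n) :=
  \matrix_(i, j) limn (series (fun k => F k i j)).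

Definition mxsum_cvg {m n : nat} (F : nat -> 'M[R]_(m, n)) : Prop :=
  forall i j, cvgn (series (fun k => F k i j)).

Definition cmxsum {m n : nat} (F : nat -> 'M[R[i]]_(m, n)) : 'M[R[i]]_(m, n) :=
  \matrix_(i, j) limn (series (fun k => (F k i j : (R[i])^o))).

Definition toC {m n : nat} (X : 'M[R]_(m, n)) : 'M[R[i]]_(m, n) :=
  map_mx (real_complex R) X.

Definition mx_nonneg {m n : nat} (X : 'M[R]_(m, n)) : Prop :=
  forall i j, 0 <= X i j.

Definition cmod (z : R[i]) : R := Normc.normc z.

Variables (M0 M : nat).
Variable A : nat -> 'M[R]_M.
Variable B0 : 'M[R]_M0.
Variable B : nat -> 'M[R]_(M0, M).    (* B(k) for k >= 1; B 0 is unused *)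
Variable C0 : 'M[R]_(M, M0).

Definition Abar : 'M[R]_M := mxsum A.

Definition Astar (z : R[i]) : 'M[R[i]]_M :=
  cmxsum (fun k => z ^+ k *: toC (A k)).
Definition GammaAstar (z : R[i]) : 'M[R[i]]_M := z^-1 *: Astar z.

Definition rA : \bar R :=
  ereal_sup [set r%:E | r in
    [set r : R | 0 <= r /\ forall i j, cvgn (series (fun k => `|A k i j| * r ^+ k))]].

Definition solves_G_eq (X : 'M[R]_M) : Prop :=
  mxsum_cvg (fun k => A k *m mxpow X k) /\ mxsum (fun k => A k *m mxpow X k) = X.

Definition is_minimal_nonneg_solution (G : 'M[R]_M) : Prop :=
  [/\ mx_nonneg G, solves_G_eq G &
      forall X, mx_nonneg X -> solves_G_eq X -> forall i j, G i j <= X i j].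

Variable G : 'M[R]_M.

(** U(k) = sum_{m >= k+1} A(m) G^{m-k-1}  (reindexed m = m' + k + 1). *)
Definition Umat (k : nat) : 'M[R]_M := mxsum (fun m => A (m + k.+1) *m mxpow G m).

Definition Rmat (k : nat) : 'M[R]_M := Umat k *m invmx (1%:M - Umat 0).

Definition Rstar (z : R[i]) : 'M[R[i]]_M :=
  cmxsum (fun k => if k == 0%N then 0 else z ^+ k *: toC (Rmat k)).

(** State space: inl j = (0, j) with j : 'I_M0 ; inr (k, j) = (k+1, j). *)
Definition state : Type := ('I_M0 + (nat * 'I_M))%type.

Definition Tmat (x y : state) : R :=
  match x, y with
  | inl i, inl j => B0 i j
  | inl i, inr (l, j) => B l.+1 i j
  | inr (k, i), inl j => if k == 0%N then C0 i j else 0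
  | inr (k, i), inr (l, j) => if (k <= l.+1)%N then A (l.+1 - k) i j else 0
  end.

(** y is reachable from x along transitions of positive probability
    (equivalently (T^n)_{xy} > 0 for some n >= 0). *)
Inductive T_reach (x : state) : state -> Prop :=
  | T_reach_refl : T_reach x x
  | T_reach_step y z : T_reach x y -> 0 < Tmat y z -> T_reach x z.

Definition T_irreducible : Prop := forall x y, T_reach x y.

Definition A_irreducible : Prop :=
  forall i j, exists n, 0 < mxpow Abar n i j.

End MG1.

(* Main.v *)
Require Import Defs.
From HB Require Import structures.
From mathcomp Require Import all_boot all_order all_algebra.
From mathcomp Require Import complex.
From mathcomp Require Import all_classical all_reals all_analysis.
Import Order.TTheory GRing.Theory Num.Theory.
Import numFieldNormedType.Exports numFieldTopology.Exports.
Import ComplexField.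
Local Open Scope classical_set_scope.
Local Open Scope ring_scope.
Set Implicit Arguments.
Unset Strict Implicit.

Unset Printing Implicit Defensive.


Set Implicit Arguments.
Unset Strict Implicit.

Set Implicit Arguments.
Unset Strict Implicit.
Unset Printing Implicit Defensive.
Section Gen.
Variable K : numFieldType.

Lemma cvg_sumr (I : Type) (r : seq I) (P : pred I) (f : I -> nat -> K) (l : I -> K) :
  (forall i, f i @ \oo --> l i) ->
  (fun n => \sum_(i <- r | P i) f i n) @ \oo --> \sum_(i <- r | P i) l i.
Proof.
move=> h; elim: r => [|a r IH].
  rewrite big_nil; under eq_cvg do rewrite big_nil; exact: cvg_cst.
rewrite big_cons; under eq_cvg do rewrite big_cons.
case: (P a) => //; exact: cvgD.
Qed.

Definition hasmx {m n} (F : nat -> 'M[K]_(m,n)) (S : 'M[K]_(m,n)) :=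
  forall i j, series (fun k => F k i j) @ \oo --> S i j.

Lemma hasmx_ext m n (F F' : nat -> 'M[K]_(m,n)) S :
  (forall k, F k = F' k) -> hasmx F S -> hasmx F' S.
Proof. by move=> e h i j; have -> : (fun k => F' k i j) = (fun k => F k i j) by apply/funext=> k; rewrite e. Qed.

Lemma hasmx_uniq m n (F : nat -> 'M[K]_(m,n)) S S' : hasmx F S -> hasmx F S' -> S = S'.
Proof. move=> h h'; apply/matrixP=> i j; exact: cvg_unique (h i j) (h' i j). Qed.

Lemma hasmxD m n (F F' : nat -> 'M[K]_(m,n)) S S' :
  hasmx F S -> hasmx F' S' -> hasmx (fun k => F k + F' k) (S + S').
Proof.
move=> h h' i j; rewrite mxE.
have -> : (fun k => (F k + F' k) i j) = (fun k => F k i j) + (fun k => F' k i j).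
  by apply/funext=> k; rewrite !mxE.
rewrite seriesD; exact: cvgD.
Qed.

Lemma hasmxN m n (F : nat -> 'M[K]_(m,n)) S :
  hasmx F S -> hasmx (fun k => - F k) (- S).
Proof.
move=> h i j; rewrite mxE.
have -> : (fun k => (- F k) i j) = - (fun k => F k i j).
  by apply/funext=> k; rewrite !mxE.
rewrite seriesN; exact: cvgN.
Qed.

Lemma hasmxB m n (F F' : nat -> 'M[K]_(m,n)) S S' :
  hasmx F S -> hasmx F' S' -> hasmx (fun k => F k - F' k) (S - S').
Proof. by move=> h h'; apply: hasmxD h (hasmxN h'). Qed.

Lemma hasmx_mulr m n p (F : nat -> 'M[K]_(m,n)) S (X : 'M[K]_(n,p)) :
  hasmx F S -> hasmx (fun k => F k *m X) (S *m X).
Proof.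
move=> h i j; rewrite mxE.
have -> : series (fun k => (F k *m X) i j) = (fun N => \sum_l (series (fun k => F k i l) N * X l j)).
  apply/funext=> N; rewrite /series /=; under eq_bigr do rewrite mxE.
  rewrite exchange_big /=; apply: eq_bigr => l _; by rewrite mulr_suml.
apply: cvg_sumr => l; exact: cvgMl.
Qed.

Lemma hasmx_mull m n p (F : nat -> 'M[K]_(n,p)) S (X : 'M[K]_(m,n)) :
  hasmx F S -> hasmx (fun k => X *m F k) (X *m S).
Proof.
move=> h i j; rewrite mxE.
have -> : series (fun k => (X *m F k) i j) = (fun N => \sum_l (X i l * series (fun k => F k l j) N)).
  apply/funext=> N; rewrite /series /=; under eq_bigr do rewrite mxE.
  rewrite exchange_big /=; apply: eq_bigr => l _; by rewrite mulr_sumr.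
apply: cvg_sumr => l; exact: cvgMr.
Qed.

Lemma hasmxZ m n (F : nat -> 'M[K]_(m,n)) S c :
  hasmx F S -> hasmx (fun k => c *: F k) (c *: S).
Proof.
move=> h i j; rewrite mxE.
have -> : series (fun k => (c *: F k) i j) = (fun N => c * series (fun k => F k i j) N).
  by apply/funext=> N; rewrite /series /= mulr_sumr; apply: eq_bigr => k _; rewrite mxE.
exact: cvgMr.
Qed.

Lemma hasmx_shift m n (F : nat -> 'M[K]_(m,n)) S :
  hasmx F S -> hasmx (fun k => F k.+1) (S - F 0%N).
Proof.
move=> h i j; rewrite !mxE.
have eS : series (fun k => F k.+1 i j) = (fun N => series (fun k => F k i j) N.+1 - F 0%N i j).
  apply/funext=> N; rewrite /series /= big_nat_recl //= addrAC subrr add0r.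
  by apply: eq_bigr.
rewrite eS; apply: cvgB; last exact: cvg_cst.
by rewrite (cvg_shiftS (series (fun k => F k i j))); exact: h.
Qed.

Lemma hasmx_unshift m n (F : nat -> 'M[K]_(m,n)) S :
  hasmx (fun k => F k.+1) S -> hasmx F (F 0%N + S).
Proof.
move=> h i j; rewrite mxE.
rewrite -(cvg_shiftS (series (fun k => F k i j))).
have eS : [sequence series (fun k => F k i j) n.+1]_n = (fun N => F 0%N i j + series (fun k => F k.+1 i j) N).
  by apply/funext=> N; rewrite /series /= big_nat_recl.
rewrite eS; apply: cvgD; [exact: cvg_cst | exact: h].
Qed.

End Gen.


Set Implicit Arguments.
Unset Strict Implicit.

Set Implicit Arguments.
Unset Strict Implicit.
Section RealSeries.
Variable R : realType.
Implicit Types u v : nat -> R.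

Lemma nn_series_incr u : (forall k, 0 <= u k) -> {homo series u : a b / (a <= b)%N >-> a <= b}.
Proof. move=> u0 a b ab; rewrite /series /= -(subnKC ab) /index_iota !subn0 iotaD big_cat /=.
by rewrite lerDl sumr_ge0. Qed.

Lemma nn_series_le u l : (forall k, 0 <= u k) -> series u @ \oo --> l -> forall N, series u N <= l.
Proof. move=> u0 h N; have <- := cvg_lim (@Rhausdorff R) h.
by apply: nondecreasing_cvgn_le; [exact: nn_series_incr|apply/cvg_ex; exists l]. Qed.

Lemma nn_term_le u l : (forall k, 0 <= u k) -> series u @ \oo --> l -> forall k, u k <= l.
Proof. move=> u0 h k; apply: le_trans (nn_series_le u0 h k.+1).
rewrite /series /= big_nat_recr //= lerDr sumr_ge0 //. Qed.

Lemma nn_lim_ge0 u l : (forall k, 0 <= u k) -> series u @ \oo --> l -> 0 <= l.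
Proof. move=> u0 h; exact: le_trans (u0 0%N) (nn_term_le u0 h 0%N). Qed.

Lemma series_cmp u v lv : (forall k, 0 <= u k) -> (forall k, u k <= v k) ->
  series v @ \oo --> lv -> exists2 lu, series u @ \oo --> lu & lu <= lv.
Proof.
move=> u0 uv h.
have cv : cvgn (series v) by apply/cvg_ex; exists lv.
have cu : cvgn (series u).
  apply: series_le_cvg cv => // k; exact: le_trans (u0 k) (uv k).
exists (limn (series u)) => //.
rewrite -(cvg_lim (@Rhausdorff R) h); exact: lim_series_le.
Qed.

Lemma series_lim_le u v lu lv : (forall k, u k <= v k) ->
  series u @ \oo --> lu -> series v @ \oo --> lv -> lu <= lv.
Proof.
move=> uv hu hv; rewrite -(cvg_lim (@Rhausdorff R) hu) -(cvg_lim (@Rhausdorff R) hv).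
apply: lim_series_le => //; apply/cvg_ex; [exists lu|exists lv]; done.
Qed.

Lemma series_abs_cvg u v : (forall k, `|u k| <= v k) -> cvgn (series v) -> cvgn (series u).
Proof.
move=> uv cv.
have cw : cvgn (series (fun k => u k + v k)).
  apply: (@series_le_cvg R _ (fun k => v k + v k)) => // k.
  - by rewrite -lerBlDr sub0r; move: (uv k); rewrite ler_norml => /andP[].
  - exact: addr_ge0 (le_trans (normr_ge0 _) (uv k)) (le_trans (normr_ge0 _) (uv k)).
  - by rewrite lerD2r; exact: le_trans (ler_norm _) (uv k).
  - have -> : series (fun k => v k + v k) = series v + series v by rewrite -seriesD.
    exact: (is_cvgD cv cv).
have -> : series u = series (fun k => u k + v k) - series v.
  rewrite -seriesN -seriesD; congr series; apply/funext=> k /=.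
  by rewrite addrK.
exact: (is_cvgB cw cv).
Qed.

Lemma nn_series_eq0 u : (forall k, 0 <= u k) -> series u @ \oo --> 0 -> forall k, u k = 0.
Proof. move=> u0 h k; apply/eqP; rewrite eq_le u0 andbT; exact: nn_term_le h k. Qed.

Lemma series_eq_terms u v (l : R) : (forall k, 0 <= u k) -> (forall k, u k <= v k) ->
  series u @ \oo --> l -> series v @ \oo --> l -> forall k, u k = v k.
Proof.
move=> u0 uv hu hv k.
have h : series (fun k => v k - u k) @ \oo --> l - l.
  have -> : series (fun k => v k - u k) = series v - series u by rewrite -seriesN -seriesD.
  exact: cvgB.
rewrite subrr in h.
have H0 : forall k, 0 <= v k - u k by move=> k'; rewrite subr_ge0.
have := nn_series_eq0 H0 h k.
by move/eqP; rewrite subr_eq0 => /eqP.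
Qed.

Lemma nn_tail_cvg u l p : (forall k, 0 <= u k) -> series u @ \oo --> l ->
  exists2 l', series (fun m => u (m + p)%N) @ \oo --> l' & l' <= l.
Proof.
move=> u0 h.
have b : forall N, series (fun m => u (m + p)%N) N <= l.
  move=> N; apply: le_trans (nn_series_le u0 h (N + p)).
  rewrite /series /= (@big_cat_nat _ _ _ p 0 (N + p)) //=; last by rewrite leq_addl.
  have -> : \sum_(p <= i < N + p) u i = \sum_(0 <= i < N) u (i + p)%N.
    by rewrite -{1}(add0n p) big_addn addnK.
  by rewrite lerDr sumr_ge0.
have c : cvgn (series (fun m => u (m + p)%N)).
  apply: nondecreasing_is_cvgn; first by apply: nn_series_incr.
  by exists l => _ [N _ <-].
exists (limn (series (fun m => u (m + p)%N))) => //.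
by apply: limr_le => //; near=> N; apply: b.
Unshelve. all: by end_near.
Qed.

End RealSeries.


Set Implicit Arguments.
Unset Strict Implicit.

Set Implicit Arguments.
Unset Strict Implicit.
Section Mx.
Variable R : realType.

Lemma hasmx_sum m n (F : nat -> 'M[R]_(m,n)) : mxsum_cvg F -> hasmx F (mxsum F).
Proof. move=> h i j; rewrite mxE; exact: (h i j). Qed.

Lemma hasmx_sumE m n (F : nat -> 'M[R]_(m,n)) S : hasmx F S -> mxsum_cvg F /\ mxsum F = S.
Proof.
move=> h; split; first by move=> i j; apply/cvg_ex; exists (S i j); exact: h.
apply/matrixP=> i j; rewrite mxE; exact: cvg_lim (h i j).
Qed.

Definition mxle m n (X Y : 'M[R]_(m,n)) := forall i j, X i j <= Y i j.
Definition substoch n (X : 'M[R]_n) := mx_nonneg X /\ forall i, \sum_j X i j <= 1.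

Lemma mxpowS n (X : 'M[R]_n) k : mxpow X k.+1 = X *m mxpow X k. Proof. by []. Qed.
Lemma mxpow0 n (X : 'M[R]_n) : mxpow X 0 = 1%:M. Proof. by []. Qed.
Lemma mxpowSr n (X : 'M[R]_n) k : mxpow X k.+1 = mxpow X k *m X.
Proof.
elim: k => [|k IH]; first by rewrite /mxpow /= mulmx1 mul1mx.
by rewrite [LHS]mxpowS IH mulmxA -mxpowS IH.
Qed.
Lemma mxpowD n (X : 'M[R]_n) a b : mxpow X (a + b) = mxpow X a *m mxpow X b.
Proof.
elim: a => [|a IH]; first by rewrite add0n mxpow0 mul1mx.
by rewrite addSn !mxpowS IH mulmxA.
Qed.

Lemma nn_mul m n p (X : 'M[R]_(m,n)) (Y : 'M[R]_(n,p)) :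
  mx_nonneg X -> mx_nonneg Y -> mx_nonneg (X *m Y).
Proof. by move=> hX hY i j; rewrite mxE sumr_ge0 // => l _; rewrite mulr_ge0. Qed.

Lemma nn_1 n : mx_nonneg (1%:M : 'M[R]_n).
Proof. by move=> i j; rewrite mxE; case: (i == j). Qed.

Lemma nn_pow n (X : 'M[R]_n) k : mx_nonneg X -> mx_nonneg (mxpow X k).
Proof. move=> h; elim: k => [|k IH]; [exact: nn_1 | exact: nn_mul]. Qed.

Lemma ss_mul n (X Y : 'M[R]_n) : substoch X -> substoch Y -> substoch (X *m Y).
Proof.
move=> [hX sX] [hY sY]; split; first exact: nn_mul.
move=> i; under eq_bigr do rewrite mxE.
rewrite exchange_big /=; apply: le_trans (sX i); apply: ler_sum => l _.
rewrite -mulr_sumr; rewrite -[leRHS]mulr1; apply: ler_wpM2l => //.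
Qed.

Lemma ss_1 n : substoch (1%:M : 'M[R]_n).
Proof.
split; first exact: nn_1.
move=> i; rewrite (bigD1 i) //= big1 ?mxE ?eqxx ?addr0 // => j /negPf.
by rewrite mxE eq_sym => ->.
Qed.

Lemma ss_pow n (X : 'M[R]_n) k : substoch X -> substoch (mxpow X k).
Proof. move=> h; elim: k => [|k IH]; [exact: ss_1 | exact: ss_mul]. Qed.

Lemma nn_entry_le_sum n (X : 'M[R]_n) i j : mx_nonneg X -> X i j <= \sum_l X i l.
Proof. by move=> h; rewrite (bigD1 j) //= lerDl sumr_ge0. Qed.

Lemma ss_entry n (X : 'M[R]_n) i j : substoch X -> X i j <= 1.
Proof. by move=> [h s]; apply: le_trans (nn_entry_le_sum i j h) (s i). Qed.

Lemma mono_mul m n p (X X' : 'M[R]_(m,n)) (Y Y' : 'M[R]_(n,p)) :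
  mx_nonneg X -> mx_nonneg Y -> mxle X X' -> mxle Y Y' -> mxle (X *m Y) (X' *m Y').
Proof.
move=> hX hY le1 le2 i j; rewrite !mxE; apply: ler_sum => l _.
by apply: ler_pM.
Qed.

Lemma mxle_refl m n (X : 'M[R]_(m,n)) : mxle X X. Proof. by []. Qed.

Lemma mono_pow n (X Y : 'M[R]_n) k : mx_nonneg X -> mxle X Y -> mxle (mxpow X k) (mxpow Y k).
Proof.
move=> h le; elim: k => [|k IH]; first exact: mxle_refl.
by rewrite !mxpowS; apply: mono_mul => //; exact: nn_pow.
Qed.

Lemma cvg_mxmul m n p (X : nat -> 'M[R]_(m,n)) (Z : nat -> 'M[R]_(n,p)) (Y : 'M[R]_(m,n)) (W : 'M[R]_(n,p)) :
  (forall i j, (fun t => X t i j) @ \oo --> Y i j) ->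
  (forall i j, (fun t => Z t i j) @ \oo --> W i j) ->
  forall i j, (fun t => (X t *m Z t) i j) @ \oo --> (Y *m W) i j.
Proof.
move=> hX hZ i j; rewrite mxE.
have -> : (fun t => (X t *m Z t) i j) = (fun t => \sum_l (X t i l * Z t l j)).
  by apply/funext=> t; rewrite mxE.
apply: cvg_sumr => l; exact: cvgM.
Qed.

Lemma cvg_mxpow n (X : nat -> 'M[R]_n) (Y : 'M[R]_n) :
  (forall i j, (fun t => X t i j) @ \oo --> Y i j) ->
  forall k i j, (fun t => (mxpow (X t) k) i j) @ \oo --> (mxpow Y k) i j.
Proof.
move=> h; elim=> [|k IH] i j; first exact: cvg_cst.
exact: cvg_mxmul.
Qed.

End Mx.


Set Implicit Arguments.
Unset Strict Implicit.

Set Implicit Arguments.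
Unset Strict Implicit.
Section GSub.
Variable R : realType.
Variable M : nat.
Variable A : nat -> 'M[R]_M.
Hypothesis HA0 : forall k, mx_nonneg (A k).
Hypothesis HAc : mxsum_cvg A.
Hypothesis HAs : forall i, \sum_j Abar A i j = 1.

Definition ones n : 'M[R]_(n,1) := const_mx 1.

Lemma mulmx_onesE m n (X : 'M[R]_(m,n)) i : (X *m ones n) i 0 = \sum_j X i j.
Proof. by rewrite mxE; apply: eq_bigr => j _; rewrite mxE mulr1. Qed.

Lemma hasA : hasmx A (Abar A).
Proof. exact: hasmx_sum. Qed.

Definition arow i k := \sum_j A k i j.

Lemma arow_ge0 i k : 0 <= arow i k.
Proof. by apply: sumr_ge0 => j _; exact: HA0. Qed.

Lemma arow_cvg i : series (arow i) @ \oo --> (1 : R).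
Proof.
have h := (hasmx_mulr (X:=ones M) hasA) i 0.
rewrite mulmx_onesE HAs in h.
have -> : arow i = (fun k => (A k *m ones M) i 0) by apply/funext=> k; rewrite mulmx_onesE.
exact: h.
Qed.

Lemma term_le X k i j : substoch X -> 0 <= (A k *m mxpow X k) i j <= arow i k.
Proof.
move=> sX; apply/andP; split; first exact: nn_mul (HA0 k) (nn_pow k sX.1) i j.
rewrite mxE /arow; apply: ler_sum => l _.
rewrite -[leRHS]mulr1; apply: ler_wpM2l; first exact: HA0.
exact: ss_entry (ss_pow k sX).
Qed.

Lemma rowsum_mul_le n (B : 'M[R]_n) Y i : mx_nonneg B -> substoch Y ->
  \sum_j (B *m Y) i j <= \sum_j B i j.
Proof.
move=> hB [hY sY]; under eq_bigr do rewrite mxE.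
rewrite exchange_big /=; apply: ler_sum => l _.
rewrite -mulr_sumr -[leRHS]mulr1; exact: ler_wpM2l.
Qed.

Definition Fm (X : 'M[R]_M) := mxsum (fun k => A k *m mxpow X k).

Lemma Fm_has X : substoch X -> hasmx (fun k => A k *m mxpow X k) (Fm X).
Proof.
move=> sX; apply: hasmx_sum => i j.
have [l hl _] := series_cmp (fun k => (andP (term_le k i j sX)).1)
   (fun k => (andP (term_le k i j sX)).2) (arow_cvg i).
by apply/cvg_ex; exists l.
Qed.

Lemma Fm_ss X : substoch X -> substoch (Fm X).
Proof.
move=> sX; have h := Fm_has sX; split.
  move=> i j; apply: nn_lim_ge0 (h i j) => k; exact: (andP (term_le k i j sX)).1.
move=> i; have h1 := (hasmx_mulr (X:=ones M) h) i 0.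
rewrite mulmx_onesE in h1.
apply: (series_lim_le _ h1 (arow_cvg i)) => k; rewrite mulmx_onesE.
exact: rowsum_mul_le (HA0 k) (ss_pow k sX).
Qed.

Lemma Fm_mono X Y : substoch X -> substoch Y -> mxle X Y -> mxle (Fm X) (Fm Y).
Proof.
move=> sX sY le i j; have h1 := Fm_has sX; have h2 := Fm_has sY.
apply: (series_lim_le _ (h1 i j) (h2 i j)) => k.
apply: mono_mul => //; [exact: nn_pow sX.1 | exact: mono_pow sX.1 le].
Qed.

Definition Xs n := iter n Fm 0.

Lemma ss0 : substoch (0 : 'M[R]_M).
Proof. by split=> [i j|i]; rewrite ?mxE // big1 // => j _; rewrite mxE. Qed.

Lemma Xs_ss n : substoch (Xs n).
Proof. elim: n => [|n IH]; [exact: ss0 | exact: Fm_ss]. Qed.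

Lemma Xs_incr n : mxle (Xs n) (Xs n.+1).
Proof.
elim: n => [|n IH]; first by move=> i j; rewrite /= mxE; exact: (Fm_ss ss0).1.
exact: Fm_mono (Xs_ss _) (Xs_ss _) IH.
Qed.

Lemma Xs_nd i j : {homo (fun n => Xs n i j) : a b / (a <= b)%N >-> a <= b}.
Proof. by apply/nondecreasing_seqP => n; exact: Xs_incr. Qed.

Definition Xst : 'M[R]_M := \matrix_(i, j) limn (fun n => Xs n i j).

Lemma Xs_cvg i j : (fun n => Xs n i j) @ \oo --> Xst i j.
Proof.
rewrite mxE; apply: nondecreasing_is_cvgn; first exact: Xs_nd.
by exists 1 => _ [n _ <-]; exact: ss_entry (Xs_ss n).
Qed.

Arguments Xs_cvg : clear implicits.

Lemma Xs_le n : mxle (Xs n) Xst.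
Proof.
move=> i j; rewrite mxE; apply: nondecreasing_cvgn_le; first exact: Xs_nd.
by apply/cvg_ex; exists (Xst i j); exact: (Xs_cvg i j).
Qed.

Lemma Xst_ss : substoch Xst.
Proof.
split=> [i j|i]; first exact: le_trans ((Xs_ss 0).1 i j) (Xs_le 0 i j).
have h : (fun n => \sum_j Xs n i j) @ \oo --> \sum_j Xst i j by apply: cvg_sumr => j; exact: Xs_cvg.
rewrite -(cvg_lim (@Rhausdorff R) h); apply: limr_le; first by apply/cvg_ex; eexists; exact: h.
by near=> n; exact: (Xs_ss n).2.
Unshelve. all: by end_near.
Qed.

Lemma Xst_fix : Fm Xst = Xst.
Proof.
apply/matrixP=> i j; apply/eqP; rewrite eq_le; apply/andP; split; last first.
  rewrite -(cvg_lim (@Rhausdorff R) (Xs_cvg i j)); apply: limr_le.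
    by apply/cvg_ex; eexists; exact: Xs_cvg.
  near=> n; apply: le_trans (Xs_incr n i j) _.
  exact: Fm_mono (Xs_ss n) Xst_ss (Xs_le n) i j.
have h := (Fm_has Xst_ss : hasmx _ _) i j.
rewrite -(cvg_lim (@Rhausdorff R) h); apply: limr_le; first by apply/cvg_ex; eexists; exact: h.
near=> N.
have hc : (fun n => series (fun k => (A k *m mxpow (Xs n) k) i j) N) @ \oo -->
          series (fun k => (A k *m mxpow Xst k) i j) N.
  rewrite /series /=; apply: cvg_sumr => k.
  apply: cvg_mxmul; first by move=> *; exact: cvg_cst.
  move=> i' j'; apply: (cvg_mxpow (X := Xs)) => i'' j''; exact: Xs_cvg.
rewrite -(cvg_lim (@Rhausdorff R) hc); apply: limr_le; first by apply/cvg_ex; eexists; exact: hc.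
near=> n; apply: le_trans (Xs_le n.+1 i j).
have hh := Fm_has (Xs_ss n).
apply: (nn_series_le _ (hh i j) N) => k.
exact: (andP (term_le k i j (Xs_ss n))).1.
Unshelve. all: by end_near.
Qed.

Lemma G_ss G : is_minimal_nonneg_solution A G -> substoch G.
Proof.
case=> G0 _ Gmin; split => // i.
have sol : solves_G_eq A Xst.
  apply: hasmx_sumE; rewrite -{2}Xst_fix; exact: Fm_has Xst_ss.
apply: le_trans (Xst_ss.2 i); apply: ler_sum => j _.
exact: Gmin Xst_ss.1 sol i j.
Qed.

End GSub.


Set Implicit Arguments.
Unset Strict Implicit.

Set Implicit Arguments.
Unset Strict Implicit.
Lemma series_shift1 (R : realType) (u : nat -> R) (l : R) :
  series u @ \oo --> l -> series (fun m => u m.+1) @ \oo --> l - u 0%N.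
Proof.
move=> h.
have eS : series (fun m => u m.+1) = (fun N => series u N.+1 - u 0%N).
  apply/funext=> N; rewrite /series /= big_nat_recl //= addrAC subrr add0r.
  by apply: eq_bigr.
rewrite eS; apply: cvgB; last exact: cvg_cst.
by rewrite (cvg_shiftS (series u)).
Qed.

Section UInv.
Variable R : realType.
Variables M0 M : nat.
Variable A : nat -> 'M[R]_M.
Variable B0 : 'M[R]_M0.
Variable B : nat -> 'M[R]_(M0, M).
Variable C0 : 'M[R]_(M, M0).
Variable G : 'M[R]_M.
Hypothesis HA0 : forall k, mx_nonneg (A k).
Hypothesis HAc : mxsum_cvg A.
Hypothesis HAs : forall i, \sum_j Abar A i j = 1.
Hypothesis HG : is_minimal_nonneg_solution A G.

Let Gs : substoch G := G_ss HA0 HAc HAs HG.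
Let arcvg := arow_cvg HAc HAs.

Lemma hasG : hasmx (fun k => A k *m mxpow G k) G.
Proof. by case: HG => _ [hc he] _; rewrite -{2}he; exact: hasmx_sum. Qed.

Lemma termY n Y i j : substoch Y -> 0 <= (A n *m Y) i j <= arow A i n.
Proof.
move=> sY; apply/andP; split; first exact: nn_mul (HA0 n) sY.1 i j.
rewrite mxE /arow; apply: ler_sum => l _.
rewrite -[leRHS]mulr1; apply: ler_wpM2l; first exact: HA0.
exact: ss_entry sY.
Qed.

Lemma hasU k : hasmx (fun m => A (m + k.+1) *m mxpow G m) (Umat A G k).
Proof.
apply: hasmx_sum => i j.
have [l1 h1 _] := nn_tail_cvg k.+1 (arow_ge0 HA0 i) (arcvg i).
have [l hl _] := series_cmp (fun m => (andP (termY (m + k.+1) i j (ss_pow m Gs))).1)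
   (fun m => (andP (termY (m + k.+1) i j (ss_pow m Gs))).2) h1.
by apply/cvg_ex; exists l.
Qed.

Arguments hasU : clear implicits.

Lemma U_nn k : mx_nonneg (Umat A G k).
Proof.
move=> i j; have h := hasU k.
apply: nn_lim_ge0 (h i j) => m; exact: (andP (termY (m + k.+1) i j (ss_pow m Gs))).1.
Qed.

Lemma U_rec k : Umat A G k = A k.+1 + Umat A G k.+1 *m G.
Proof.
have h1 := hasmx_shift (hasU k).
have h2 := hasmx_mulr (X := G) (hasU k.+1).
have h3 : hasmx (fun m => A (m + k.+2) *m mxpow G m *m G) (Umat A G k - A (0 + k.+1) *m mxpow G 0).
  apply: hasmx_ext h1 => m; by rewrite addSnnS mxpowSr mulmxA.
have := hasmx_uniq h3 h2; rewrite add0n mxpow0 mulmx1 => <-.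
by rewrite addrC subrK.
Qed.

Lemma G_rec : G = A 0 + Umat A G 0 *m G.
Proof.
have h1 := hasmx_shift hasG.
have h2 := hasmx_mulr (X := G) (hasU 0).
have h3 : hasmx (fun m => A (m + 1) *m mxpow G m *m G) (G - A 0 *m mxpow G 0).
  apply: hasmx_ext h1 => m; by rewrite addn1 mxpowSr mulmxA.
have := hasmx_uniq h3 h2; rewrite mxpow0 mulmx1 => <-.
by rewrite addrC subrK.
Qed.

Definition rs (X : 'M[R]_M) j := \sum_l X j l.

Lemma push (s : nat) (Y : nat -> 'M[R]_M) (Z : 'M[R]_M) j (L : R) :
  (forall m, substoch (Y m)) -> hasmx (fun m => A (m + s) *m Y m) Z ->
  series (fun m => arow A j (m + s)) @ \oo --> L -> L <= rs Z j ->
  rs Z j = L /\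
  forall m j', 0 < A (m + s) j j' -> rs (Y m) j' = 1 /\ (forall l, 0 < Y m j' l -> 0 < Z j l).
Proof.
move=> sY hZ hL Lle.
have hx := (hasmx_mulr (X := ones R M) hZ) j 0.
rewrite mulmx_onesE in hx.
have xle : forall m, (fun m => (A (m + s) *m Y m *m ones R M) j 0) m <= arow A j (m + s).
  move=> m /=; rewrite mulmx_onesE; exact: rowsum_mul_le (HA0 _) (sY m).
have x0 : forall m, 0 <= (fun m => (A (m + s) *m Y m *m ones R M) j 0) m.
  move=> m /=; rewrite mulmx_onesE; apply: sumr_ge0 => l _; exact: nn_mul (HA0 _) (sY m).1 j l.
have Zle : rs Z j <= L := series_lim_le xle hx hL.
have eZ : rs Z j = L by apply/eqP; rewrite eq_le Zle Lle.
split => // m j' Apos.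
have hx' : series (fun m => (A (m + s) *m Y m *m ones R M) j 0) @ \oo --> L by rewrite -eZ.
have eqm := series_eq_terms x0 xle hx' hL m.
rewrite /= mulmx_onesE /arow in eqm.
split.
  have e1 : \sum_l A (m + s) j l * rs (Y m) l = \sum_l (A (m + s) *m Y m) j l.
    under [RHS]eq_bigr do rewrite mxE.
    rewrite exchange_big /=; apply: eq_bigr => l _; by rewrite /rs mulr_sumr.
  have : \sum_l (A (m + s) j l * (1 - rs (Y m) l)) = 0.
    under eq_bigr do rewrite mulrBr mulr1.
    by rewrite sumrB e1 eqm subrr.
  have nn : forall l, true -> 0 <= A (m + s) j l * (1 - rs (Y m) l).
    move=> l _; apply: mulr_ge0; first exact: HA0.
    by rewrite subr_ge0; case: (sY m) => _ ->.
  move/(psumr_eq0P nn) => H.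
  have := H j' isT; move/eqP; rewrite mulf_eq0 (gt_eqF Apos) /= subr_eq0 => /eqP <-//.
move=> l Ypos.
have hZl := hZ j l.
apply: lt_le_trans (nn_term_le _ hZl m).
  rewrite mxE (bigD1 j') //= ltr_pwDl //; first exact: mulr_gt0.
  by apply: sumr_ge0 => k _; apply: mulr_ge0; [exact: HA0|exact: (sY m).1].
by move=> m'; exact: nn_mul (HA0 _) (sY m').1 j l.
Qed.

End UInv.


Set Implicit Arguments.
Unset Strict Implicit.

Set Implicit Arguments.
Unset Strict Implicit.
From mathcomp Require Import zify.
Unset Implicit Arguments.
Section UInv2.
Variable R : realType.
Variables M0 M : nat.
Variable A : nat -> 'M[R]_M.
Variable B0 : 'M[R]_M0.
Variable B : nat -> 'M[R]_(M0, M).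
Variable C0 : 'M[R]_(M, M0).
Variable G : 'M[R]_M.
Hypothesis HM0 : (0 < M0)%N.
Hypothesis HA0 : forall k, mx_nonneg (A k).
Hypothesis HAc : mxsum_cvg A.
Hypothesis HAs : forall i, \sum_j Abar A i j = 1.
Hypothesis HG : is_minimal_nonneg_solution A G.
Hypothesis HT : T_irreducible A B0 B C0.

Let Gs : substoch G := G_ss HA0 HAc HAs HG.
Let arcvg := arow_cvg HAc HAs.
Let hU k := @hasU R M A G HA0 HAc HAs HG k.
Arguments hU : clear implicits.
Let U0 := Umat A G 0.

Lemma arow1_cvg i : series (fun m => arow A i (m + 1)) @ \oo --> 1 - arow A i 0.
Proof.
have -> : (fun m => arow A i (m + 1)) = (fun m => arow A i m.+1) by apply/funext=> m; rewrite addn1.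
exact: series_shift1 (arcvg i).
Qed.

Lemma rs1 i : rs (1%:M : 'M[R]_M) i = 1.
Proof.
rewrite /rs (bigD1 i) //= big1 ?mxE ?eqxx ?addr0 // => j /negPf.
by rewrite mxE eq_sym => ->.
Qed.

Lemma U0_rs i : rs U0 i <= 1.
Proof.
have hx := (hasmx_mulr (X := ones R M) (hU 0)) i 0.
rewrite mulmx_onesE in hx.
have h2 : rs U0 i <= 1 - arow A i 0.
  apply: (series_lim_le _ hx (arow1_cvg i)) => m.
  rewrite mulmx_onesE; exact: rowsum_mul_le (HA0 _) (ss_pow m Gs).
apply: le_trans h2 _; by rewrite lerBlDr lerDl arow_ge0.
Qed.

Section Contra.
Variable w : 'I_M -> R.
Hypothesis hw : forall i, w i = \sum_l U0 i l * w l.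
Variable i0 : 'I_M.
Hypothesis hmax : forall j, `|w j| <= `|w i0|.
Hypothesis cpos : 0 < `|w i0|.
Let c := `|w i0|.
Definition Sset l := `|w l| = c.

Lemma Sfacts i : Sset i -> rs U0 i = 1 /\ forall l, 0 < U0 i l -> Sset l.
Proof.
move=> Si.
have U0nn := U_nn HA0 HAc HAs HG 0.
have e1 : c <= \sum_l U0 i l * `|w l|.
  rewrite -Si hw; apply: le_trans (ler_norm_sum _ _ _) _.
  apply: ler_sum => l _; rewrite normrM ger0_norm //.
have e2 : \sum_l U0 i l * `|w l| <= c * rs U0 i.
  rewrite /rs mulr_sumr; apply: ler_sum => l _; rewrite mulrC; apply: ler_wpM2r; [exact: U0nn | exact: hmax].
have e3 : c * rs U0 i <= c.
  by rewrite -[leRHS]mulr1; apply: ler_wpM2l; [exact: ltW | exact: U0_rs].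
have ers : rs U0 i = 1.
  apply/eqP; rewrite eq_le U0_rs /=.
  by rewrite -(ler_pM2l cpos) mulr1 (le_trans e1 e2).
split => // l Ul.
have esum : \sum_l U0 i l * (c - `|w l|) = 0.
  under eq_bigr do rewrite mulrBr.
  rewrite sumrB -mulr_suml -/(rs U0 i) ers mul1r.
  have : \sum_l U0 i l * `|w l| = c.
    apply/eqP; rewrite eq_le e1 andbT; apply: le_trans e2 _; by rewrite ers mulr1.
  by move=> ->; rewrite subrr.
have nn : forall l, true -> 0 <= U0 i l * (c - `|w l|).
  by move=> l' _; rewrite mulr_ge0 // subr_ge0.
have := (psumr_eq0P nn esum) l isT; move/eqP; rewrite mulf_eq0 (gt_eqF Ul) /= subr_eq0.
by move/eqP=> h; rewrite /Sset -h.
Qed.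

Lemma p1 i : Sset i -> arow A i 0 = 0 /\
  forall m j', 0 < A (m + 1) i j' -> rs (mxpow G m) j' = 1 /\ (forall l, 0 < mxpow G m j' l -> Sset l).
Proof.
move=> Si; have [ers sup] := Sfacts i Si.
have hZ : hasmx (fun m => A (m + 1) *m mxpow G m) U0 by exact: hU 0.
have Lle : 1 - arow A i 0 <= rs U0 i by rewrite ers lerBlDr lerDl arow_ge0.
have [eL H] := push HA0 (fun m => ss_pow m Gs) hZ (arow1_cvg i) Lle.
split.
  by move: eL; rewrite ers => /eqP; rewrite eq_sym subr_eq addrC -subr_eq subrr eq_sym => /eqP.
move=> m j' Apos; have [h1 h2] := H m j' Apos; split => // l Gl.
exact: (sup l (h2 l Gl)).
Qed.

Lemma p2 q j : (0 < q)%N -> rs (mxpow G q) j = 1 -> (forall l, 0 < mxpow G q j l -> Sset l) ->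
  forall m j', 0 < A m j j' -> rs (mxpow G (m + q.-1)) j' = 1 /\
     (forall l, 0 < mxpow G (m + q.-1) j' l -> Sset l).
Proof.
case: q => // q _ rsq supq m j' Apos.
have hZ0 := hasmx_mulr (X := mxpow G q) (hasG HG).
have hZ : hasmx (fun m => A (m + 0) *m (mxpow G m *m mxpow G q)) (mxpow G q.+1).
  apply: hasmx_ext hZ0 => k; by rewrite addn0 mulmxA.
have hL : series (fun m => arow A j (m + 0)) @ \oo --> (1 : R).
  have -> : (fun m => arow A j (m + 0)) = arow A j by apply/funext=> k; rewrite addn0.
  exact: arcvg.
have sY : forall m, substoch (mxpow G m *m mxpow G q).
  move=> k; apply: ss_mul; exact: ss_pow.
have Lle : (1 : R) <= rs (mxpow G q.+1) j by rewrite rsq.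
have [_ H] := push HA0 sY hZ hL Lle.
have Apos' : 0 < A (m + 0)%N j j' by rewrite addn0.
have [h1 h2] := H m j' Apos'.
rewrite /= mxpowD; split => // l Gl; apply: supq; exact: h2 l Gl.
Qed.

Definition Wp (x : state M0 M) : Prop :=
  match x with
  | inl _ => False
  | inr (p, j) => (0 < p)%N /\ rs (mxpow G p.-1) j = 1 /\ (forall l, 0 < mxpow G p.-1 j l -> Sset l)
  end.

Lemma W_step x y : Wp x -> 0 < Tmat A B0 B C0 x y -> Wp y.
Proof.
case: x => [i|[p j]] //= [p0 [rsp supp]].
case: y => [j0|[l j']] /=.
  by case: p p0 {rsp supp} => // p _ /=; rewrite lt_irreflexive.

case: ifP => hpl; last by rewrite lt_irreflexive.
move=> Apos.
case: p p0 hpl Apos rsp supp => // [[|q]] _ hpl Apos rsp supp.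
- have Sj : Sset j by apply: supp; rewrite /= mxE eqxx ltr01.
  have [a0 H] := p1 j Sj.
  rewrite subn1 /= in Apos.
  case: l hpl Apos => [|l'] _ Apos.
    have := nn_entry_le_sum j j' (HA0 0); rewrite -/(arow A j 0) a0 => h.
    by move: (lt_le_trans Apos h); rewrite ltxx.
  have Apos' : 0 < A (l' + 1)%N j j' by rewrite addn1.
  have [h1 h2] := H l' j' Apos'.
  by split.
- have [h1 h2] := p2 q.+1 j isT rsp supp (l.+1 - q.+2) j' Apos.
  have el : l.-1 = (l.+1 - q.+2 + q.+1.-1)%N by move: hpl; rewrite /=; lia.
  split; first by move: hpl; lia.
  by rewrite el.
Qed.

Lemma reach_W x y : T_reach A B0 B C0 x y -> Wp x -> Wp y.
Proof.
elim=> // y' z _ IH pos Wx.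
exact: W_step y' z (IH Wx) pos.
Qed.

Lemma contra_W : False.
Proof.
have Wx : Wp (inr (1%N, i0)).
  split => //; split; first by rewrite /= rs1.
  move=> l; rewrite /= mxE; case: eqP => [<-|] //; by rewrite ltxx.
exact: reach_W _ _ (HT (inr (1%N, i0)) (inl (Ordinal HM0))) Wx.
Qed.

End Contra.
Lemma U0_unit : (1%:M - U0) \in unitmx.
Proof.
rewrite unitmxE unitfE -det_tr; apply/negP => /det0P [v vnz hv].
have hv' : v = v *m U0^T.
  apply/eqP; rewrite -subr_eq0 -{1}(mulmx1 v) -mulmxBr -trmx1 -raddfB /=; exact/eqP.
pose w := fun i => v 0 i.
have hw : forall i, w i = \sum_l U0 i l * w l.
  move=> i; rewrite /w {1}hv' mxE; apply: eq_bigr => l _; by rewrite mxE mulrC.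
have [k wk] : exists k, w k != 0.
  case: (pselect (exists k, w k != 0)) => // hn; exfalso; apply: (negP vnz).
  apply/eqP/matrixP => a b; rewrite (ord1 a) mxE; apply/eqP; apply/negPn/negP => hb.
  by apply: hn; exists b.
case: (@arg_maxP _ R _ k xpredT (fun i => `|w i|) isT) => i0 _ Hmax.
have hmax : forall j, `|w j| <= `|w i0| by move=> j; exact: Hmax.
have cpos : 0 < `|w i0| by apply: lt_le_trans (hmax k); rewrite normr_gt0.
exact: (contra_W w hw i0 hmax cpos).
Qed.

End UInv2.


Set Implicit Arguments.
Unset Strict Implicit.

Set Implicit Arguments.
Unset Strict Implicit.
Unset Implicit Arguments.
Local Open Scope complex_scope.
Section Cpx.
Variable R : realType.

Lemma normc_real (r : R) : Normc.normc (r%:C) = `|r|.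
Proof. by rewrite /Normc.normc /= expr0n /= addr0 sqrtr_sqr. Qed.

Lemma normC_cmod (x : R[i]) : `|x| = (cmod x)%:C.
Proof. by case: x => a b; rewrite normc_def. Qed.

Lemma cvg_realC (x : nat -> R) (a : R) : x @ \oo --> a ->
  (fun n => (x n)%:C : (R[i])^o) @ \oo --> (a%:C : (R[i])^o).
Proof.
move/cvgrPdist_lt => h; apply/cvgrPdist_lt => e e0.
move: (e0); rewrite ltcE => /andP[/eqP Ie Re0]; rewrite /= in Ie Re0.
near=> n.
have hn : `|a - x n| < complex.Re e by near: n; exact: h.
rewrite -rmorphB normC_cmod /cmod normc_real.
have -> : e = (complex.Re e)%:C.
  by move: Ie; clear; case: e => ea eb /= ->.
by rewrite ltcR.
Unshelve. all: by end_near.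
Qed.

Lemma Re_le (x : R[i]) : `|complex.Re x| <= cmod x.
Proof.
case: x => a b /=; rewrite /cmod /Normc.normc /= -sqrtr_sqr.
by apply: ler_wsqrtr; rewrite lerDl sqr_ge0.
Qed.

Lemma Im_le (x : R[i]) : `|complex.Im x| <= cmod x.
Proof.
case: x => a b /=; rewrite /cmod /Normc.normc /= -sqrtr_sqr.
by apply: ler_wsqrtr; rewrite lerDr sqr_ge0.
Qed.

Lemma cpx_abs_cvg (u : nat -> R[i]) (b : nat -> R) :
  (forall k, cmod (u k) <= b k) -> cvgn (series b) ->
  exists l : R[i], series (u : nat -> (R[i])^o) @ \oo --> (l : (R[i])^o).
Proof.
move=> ub cb.
have cRe : cvgn (series (fun k => complex.Re (u k))).
  apply: series_abs_cvg cb => k; exact: le_trans (Re_le _) (ub k).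
have cIm : cvgn (series (fun k => complex.Im (u k))).
  apply: series_abs_cvg cb => k; exact: le_trans (Im_le _) (ub k).
exists ((limn (series (fun k => complex.Re (u k))))%:C + 'i%C * (limn (series (fun k => complex.Im (u k))))%:C).
have -> : series u = (fun N => (series (fun k => complex.Re (u k)) N)%:C + 'i%C * (series (fun k => complex.Im (u k)) N)%:C).
  apply/funext => N; rewrite /series /= !rmorph_sum mulr_sumr -big_split /=.
  by apply: eq_bigr => k _; rewrite -complexE.
apply: cvgD; first exact: cvg_realC.
apply: cvgMr; exact: cvg_realC.
Qed.

End Cpx.


Set Implicit Arguments.
Unset Strict Implicit.

Set Implicit Arguments.
Unset Strict Implicit.
From mathcomp Require Import ring.
Unset Implicit Arguments.
Local Open Scope complex_scope.

Lemma cmodM (R : realType) (x y : R[i]) : cmod (x * y) = cmod x * cmod y.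
Proof. exact: Normc.normcM. Qed.

Lemma cmodX (R : realType) (x : R[i]) k : cmod (x ^+ k) = cmod x ^+ k.
Proof.
elim: k => [|k IH]; first by rewrite !expr0 /cmod Normc.normc1.
by rewrite !exprS cmodM IH.
Qed.

Lemma cmod_ge0 (R : realType) (x : R[i]) : 0 <= cmod x.
Proof. by case: x => a b; rewrite /cmod /Normc.normc /= sqrtr_ge0. Qed.

Lemma hasmx_cmxsum (R : realType) m n (F : nat -> 'M[R[i]]_(m, n)) :
  (forall i j, exists l : R[i], series ((fun k => F k i j) : nat -> (R[i])^o) @ \oo --> (l : (R[i])^o)) ->
  hasmx F (cmxsum F).
Proof.
move=> h i j; rewrite mxE; have [l hl] := h i j.
by rewrite (cvg_lim _ hl).
Qed.

Lemma cmxsum_eq (R : realType) m n (F : nat -> 'M[R[i]]_(m, n)) S :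
  hasmx F S -> cmxsum F = S.
Proof. move=> h; apply/matrixP=> i j; rewrite mxE; exact: cvg_lim (h i j). Qed.

Lemma alg (V : zmodType) (one a a0 u g P : V) : g = a0 + u ->
  one - a = (one - g) - (P - (P - (a - a0) + u)).
Proof.
move=> ->.
have -> : P - (P - (a - a0) + u) = (a - a0) - u.
  by rewrite opprD opprB addrA addrCA subrr addr0.
by rewrite opprD addrA opprB addrA subrK opprB addrA subrK.
Qed.

Section CpxSeries.
Variable R : realType.
Variable M : nat.
Variable A : nat -> 'M[R]_M.
Variable G : 'M[R]_M.
Hypothesis HA0 : forall k, mx_nonneg (A k).
Hypothesis HAc : mxsum_cvg A.
Hypothesis HAs : forall i, \sum_j Abar A i j = 1.
Hypothesis HG : is_minimal_nonneg_solution A G.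
Variable z : R[i].
Variable r : R.
Hypothesis z1 : 1 < cmod z.
Hypothesis zr : cmod z < r.
Hypothesis hr : forall i j, cvgn (series (fun k => `|A k i j| * r ^+ k)).

Let Gs : substoch G := G_ss HA0 HAc HAs HG.

Lemma r_gt1 : 1 < r. Proof. exact: lt_trans z1 zr. Qed.
Lemma r_gt0 : 0 < r. Proof. exact: lt_trans ltr01 r_gt1. Qed.

Lemma hasAst : hasmx (fun k => z ^+ k *: toC (A k)) (Astar A z).
Proof.
apply: hasmx_cmxsum => i j.
apply: (cpx_abs_cvg R _ (fun k => `|A k i j| * r ^+ k)) => [k|]; last exact: hr.
rewrite !mxE cmodM cmodX /cmod normc_real mulrC -/(cmod z).
apply: ler_wpM2l => //; apply: lerXn2r => //; [exact: cmod_ge0 | exact: ltW (lt_trans ltr01 r_gt1) | exact: ltW].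
Qed.

Definition Crow i := limn (series (fun n => arow A i n * r ^+ n)).

Lemma Crow_cvg i : series (fun n => arow A i n * r ^+ n) @ \oo --> Crow i.
Proof.
suff : cvgn (series (fun n => arow A i n * r ^+ n)) by [].
have -> : series (fun n => arow A i n * r ^+ n) = (fun N => \sum_j series (fun k => `|A k i j| * r ^+ k) N).
  apply/funext=> N; rewrite /series /= exchange_big /=; apply: eq_bigr => k _.
  rewrite /arow mulr_suml; apply: eq_bigr => j _; by rewrite ger0_norm // HA0.
apply/cvg_ex; eexists; apply: cvg_sumr => j; exact: (hr i j).
Qed.

Lemma U_bound k i j : Umat A G k i j <= Crow i / r ^+ k.+1.
Proof.
have hv := Crow_cvg i.
have v0 : forall n, 0 <= arow A i n * r ^+ n.
  by move=> n; rewrite mulr_ge0 ?arow_ge0 // exprn_ge0 // ltW // r_gt0.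
have [l' hl' l'le] := nn_tail_cvg k.+1 v0 hv.
have hs : series (fun m => arow A i (m + k.+1) * r ^+ (m + k.+1) * (r ^+ k.+1)^-1) @ \oo --> l' * (r ^+ k.+1)^-1.
  have -> : series (fun m => arow A i (m + k.+1) * r ^+ (m + k.+1) * (r ^+ k.+1)^-1) =
            (fun N => series (fun m => arow A i (m + k.+1) * r ^+ (m + k.+1)) N * (r ^+ k.+1)^-1).
    by apply/funext=> N; rewrite /series /= mulr_suml.
  exact: cvgMl.
have hU := @hasU R M A G HA0 HAc HAs HG k i j.
have h1 : Umat A G k i j <= l' * (r ^+ k.+1)^-1.
  apply: (series_lim_le _ hU hs) => m.
  have [_ t2] := andP (termY HA0 (m + k.+1) i j (ss_pow m Gs)).
  apply: le_trans t2 _.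
  rewrite exprD mulrA mulrK; last by rewrite unitfE expf_neq0 // gt_eqF // r_gt0.
  rewrite -[leLHS]mulr1 ler_wpM2l ?arow_ge0 //.
  by rewrite exprn_ege1 // ltW // r_gt1.
apply: le_trans h1 _.
by apply: ler_wpM2r => //; rewrite invr_ge0 exprn_ge0 // ltW // r_gt0.
Qed.

Lemma z_neq0 : z != 0.
Proof. apply/negP => /eqP z0; move: z1; by rewrite z0 /cmod Normc.normc0 ltr10. Qed.

Definition Phi := cmxsum (fun k => z ^+ k *: toC (Umat A G k)).

Lemma hasPhi : hasmx (fun k => z ^+ k *: toC (Umat A G k)) Phi.
Proof.
apply: hasmx_cmxsum => i j.
apply: (cpx_abs_cvg R _ (geometric (Crow i / r) (cmod z / r))) => [k|].
  rewrite 2!mxE cmodM cmodX /cmod normc_real -/(cmod z) ger0_norm; last exact: U_nn HA0 HAc HAs HG k i j.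
  apply: le_trans (_ : cmod z ^+ k * (Crow i / r ^+ k.+1) <= _).
    by apply: ler_wpM2l; [rewrite exprn_ge0 // cmod_ge0 | exact: U_bound].
  have rn0 : r != 0 by rewrite gt_eqF // r_gt0.
  rewrite /geometric /= expr_div_n exprS.
  have -> : Crow i / r * (cmod z ^+ k / r ^+ k) = cmod z ^+ k * (Crow i / (r * r ^+ k)).
    by field; rewrite rn0 expf_neq0.
  by [].
apply/cvg_ex; eexists; apply: cvg_geometric_series.
rewrite ger0_norm; last by rewrite divr_ge0 ?cmod_ge0 // ltW // r_gt0.
by rewrite ltr_pdivrMr ?r_gt0 // mul1r.
Qed.

Let U k := Umat A G k.
Let N := invmx (1%:M - U 0).
Let c := z^-1.

Lemma F1 k : toC (U k) = toC (A k.+1) + toC (U k.+1) *m toC G.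
Proof. by rewrite /U (U_rec HA0 HAc HAs HG k) /toC map_mxD map_mxM. Qed.

Lemma F2 : toC G = toC (A 0) + toC (U 0) *m toC G.
Proof. by rewrite {1}(G_rec HA0 HAc HAs HG) /toC map_mxD map_mxM. Qed.

Lemma zsh (X : nat -> 'M[R[i]]_M) k : c *: (z ^+ k.+1 *: X k) = z ^+ k *: X k.
Proof. by rewrite scalerA exprS mulrA mulVf ?z_neq0 // mul1r. Qed.

Lemma F3 : hasmx (fun k => z ^+ k *: toC (U k.+1)) (c *: (Phi - toC (U 0))).
Proof.
have h := hasmxZ (c := c) (hasmx_shift hasPhi).
rewrite expr0 scale1r in h.
apply: hasmx_ext h => k; exact: (zsh (fun k => toC (U k.+1))).
Qed.

Lemma F4 : hasmx (fun k => z ^+ k *: toC (A k.+1)) (c *: (Astar A z - toC (A 0))).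
Proof.
have h := hasmxZ (c := c) (hasmx_shift hasAst).
rewrite expr0 scale1r in h.
apply: hasmx_ext h => k; exact: (zsh (fun k => toC (A k.+1))).
Qed.

Lemma F5 : Phi = c *: (Astar A z - toC (A 0)) + (c *: (Phi - toC (U 0))) *m toC G.
Proof.
have h := hasmxD F4 (hasmx_mulr (X := toC G) F3).
have h' : hasmx (fun k => z ^+ k *: toC (U k)) (c *: (Astar A z - toC (A 0)) + (c *: (Phi - toC (U 0))) *m toC G).
  apply: hasmx_ext h => k; by rewrite (F1 k) scalerDr scalemxAl.
exact: hasmx_uniq hasPhi h'.
Qed.

Lemma F6 : Rstar A G z = (Phi - toC (U 0)) *m toC N.
Proof.
apply: cmxsum_eq.
have h := hasmx_mulr (X := toC N) (hasmx_shift hasPhi).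
rewrite expr0 scale1r in h.
have h2 : hasmx (fun k => (if k.+1 == 0%N then 0 else z ^+ k.+1 *: toC (Rmat A G k.+1)))
    ((Phi - toC (U 0)) *m toC N).
  apply: hasmx_ext h => k /=; by rewrite /Rmat /toC map_mxM scalemxAl.
have := hasmx_unshift (F := fun k => if k == 0%N then 0 else z ^+ k *: toC (Rmat A G k)) h2.
by rewrite /= add0r.
Qed.

Hypothesis Uunit : (1%:M - U 0) \in unitmx.

Lemma NU : toC N *m (1%:M - toC (U 0)) = 1%:M.
Proof.
have e : toC (N *m (1%:M - U 0)) = 1%:M by rewrite /N mulVmx // /toC map_mx1.
by rewrite /toC map_mxM map_mxB map_mx1 in e.
Qed.

Lemma factor : 1%:M - GammaAstar A z =
  (1%:M - Rstar A G z) *m (1%:M - toC (U 0)) *m (1%:M - c *: toC G).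
Proof.
have s1 : (1%:M - Rstar A G z) *m (1%:M - toC (U 0)) = 1%:M - Phi.
  rewrite mulmxBl mul1mx F6 -mulmxA NU mulmx1.
  by rewrite opprB addrA subrK.
rewrite s1.
have e5 : Phi = c *: (Astar A z - toC (A 0)) + (c *: (Phi *m toC G) - c *: (toC (U 0) *m toC G)).
  rewrite -scalerBr -mulmxBl scalemxAl; exact: F5.
set Y := c *: (Phi *m toC G) in e5 *.
have eY : Y = Phi - c *: (Astar A z - toC (A 0)) + c *: (toC (U 0) *m toC G).
  by rewrite {1}e5 (addrC (c *: _)) addrK subrK.
rewrite mulmxBl mul1mx mulmxBr mulmx1 -scalemxAr -/Y eY /GammaAstar.
rewrite [c *: (Astar A z - _)]scalerBr; apply: alg.
by rewrite -scalerDr -F2.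
Qed.

End CpxSeries.


Set Implicit Arguments.
Unset Strict Implicit.

Set Implicit Arguments.
Unset Strict Implicit.
Unset Implicit Arguments.
Local Open Scope complex_scope.

Lemma det_IG (R : realType) M (G : 'M[R]_M) (z : R[i]) :
  substoch G -> 1 < cmod z -> \det (1%:M - z^-1 *: toC G) != 0.
Proof.
move=> [G0 Gs] z1.
have zn0 : z != 0.
  apply/negP => /eqP z0; move: z1; by rewrite z0 /cmod Normc.normc0 ltr10.
apply/negP => /det0P [v vnz hv].
have hv' : v *m toC G = z *: v.
  move: hv; rewrite mulmxBr mulmx1 -scalemxAr => /eqP; rewrite subr_eq0 => /eqP hv.
  by rewrite {2}hv scalerA mulfV // scale1r.
pose s := \sum_j `|v 0 j|.
have [k vk] : exists k, v 0 k != 0.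
  case: (pselect (exists k, v 0 k != 0)) => // hn; exfalso; apply: (negP vnz).
  apply/eqP/matrixP => a b; rewrite (ord1 a) mxE; apply/eqP; apply/negPn/negP => hb.
  by apply: hn; exists b.
have s_pos : 0 < s.
  have h : `|v 0 k| <= s by rewrite /s (bigD1 k) //= lerDl sumr_ge0.
  by apply: lt_le_trans h; rewrite normr_gt0.
have Gc : forall i j, toC G i j = (G i j)%:C by move=> i j; rewrite mxE.
have key : `|z| * s <= s.
  have -> : `|z| * s = \sum_j `|(v *m toC G) 0 j|.
    rewrite /s mulr_sumr; apply: eq_bigr => j _; by rewrite hv' mxE normrM.
  have h1 : \sum_j `|(v *m toC G) 0 j| <= \sum_j \sum_i `|v 0 i| * (G i j)%:C.
    apply: ler_sum => j _; rewrite mxE; apply: le_trans (ler_norm_sum _ _ _) _.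
    apply: ler_sum => i _; rewrite normrM Gc (normC_cmod R (G i j)%:C) /cmod normc_real (ger0_norm (G0 i j)) //.
  apply: le_trans h1 _.
  rewrite exchange_big /= /s; apply: ler_sum => i _.
  rewrite -mulr_sumr -[leRHS]mulr1; apply: ler_wpM2l => //.
  rewrite -rmorph_sum -(rmorph1 (real_complex R)) lecR; exact: Gs.
have : `|z| <= 1 by rewrite -(ler_pM2r s_pos) mul1r.
rewrite normC_cmod -(rmorph1 (real_complex R)) lecR => h.
by move: (lt_le_trans z1 h); rewrite ltxx.
Qed.

Local Close Scope complex_scope.

Theorem proposition2p3 (R : realType) (M0 M : nat)
  (A : nat -> 'M[R]_M) (B0 : 'M[R]_M0) (B : nat -> 'M[R]_(M0, M))
  (C0 : 'M[R]_(M, M0)) (G : 'M[R]_M) :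
  (0 < M0)%N -> (0 < M)%N ->
  (* nonnegative blocks *)
  (forall k, mx_nonneg (A k)) -> mx_nonneg B0 ->
  (forall k, (0 < k)%N -> mx_nonneg (B k)) -> mx_nonneg C0 ->
  (* A = sum_k A(k) is stochastic *)
  mxsum_cvg A -> (forall i, \sum_j Abar A i j = 1) ->
  (* B(0) e + sum_{k>=1} B(k) e = e *)
  (forall i, cvgn (series (fun k => \sum_j B k.+1 i j)) /\
             \sum_j B0 i j + limn (series (fun k => \sum_j B k.+1 i j)) = 1) ->
  (* C(0) e + sum_{k>=1} A(k) e = e  (rows of level 1 of T sum to one) *)
  (forall i, cvgn (series (fun k => \sum_j A k.+1 i j)) /\
             \sum_j C0 i j + limn (series (fun k => \sum_j A k.+1 i j)) = 1) ->
  (* G is the minimal nonnegative solution of X = sum_k A(k) X^k *)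
  is_minimal_nonneg_solution A G ->
  (* T and A irreducible, r_A > 1 *)
  T_irreducible A B0 B C0 -> A_irreducible A ->
  (1 < rA A)%E ->
  forall z : R[i], 1 < cmod z -> ((cmod z)%:E < rA A)%E ->
    (\det (1%:M - GammaAstar A z) = 0 <-> \det (1%:M - Rstar A G z) = 0).
Proof.
move=> HM0 HM HA0 HB0 HB HC0 HAc HAs HBs HCs HG HT HAirr HrA z z1 zrA.
have [y [r [r0 hr] <-] zr] := ereal_sup_gt zrA.
rewrite lte_fin in zr.
have Uunit := U0_unit R M0 M A B0 B C0 G HM0 HA0 HAc HAs HG HT.
have fac := factor R M A G HA0 HAc HAs HG z r z1 zr hr Uunit.
have d2 : \det (1%:M - toC (Umat A G 0)) != 0.
  have e : toC (1%:M - Umat A G 0) = 1%:M - toC (Umat A G 0) by rewrite /toC map_mxB map_mx1.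
  rewrite -e /toC det_map_mx fmorph_eq0.
  by move: Uunit; rewrite unitmxE unitfE.
have d3 := det_IG R M G z (G_ss HA0 HAc HAs HG) z1.
rewrite fac !det_mulmx.
split.
  move/eqP; rewrite !mulf_eq0 (negPf d2) (negPf d3) !orbF; by move/eqP.
by move=> ->; rewrite !mul0r.
Qed.
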